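(* Let $S_1,\dots,S_m\subseteq N$. Then $\bigcap_{i=1}^m P_{S_i}=P_{\bigcap_{i=1}^m S_i}$ as subgroups of $P_n$.
   Context: $P_n$ denotes the pure braid group on $n$ strands, generated by elements $p_{a,b}$ for $1\le a<b\le n$ subject to the relations: (A) $p_{a,b}p_{a,c}p_{b,c}=p_{a,c}p_{b,c}p_{a,b}=p_{b,c}p_{a,b}p_{a,c}$ for $1\le a<b<c\le n$; (B) $p_{a,b}p_{c,d}=p_{c,d}p_{a,b}$ and $p_{a,d}p_{b,c}=p_{b,c}p_{a,d}$ for $1\le a<b<c<d\le n$; (C) $p_{a,c}p_{b,c}^{-1}p_{b,d}p_{b,c}=p_{b,c}^{-1}p_{b,d}p_{b,c}p_{a,c}$ for $1\le a<b<c<d\le n$. Let $N=\{1,\dots,n\}$. For $S\subseteq N$, $P_S$ is the subgroup of $P_n$ generated by the $p_{a,b}$ with $a\in S$ and $b\in S$ (so $P_\emptyset$ and $P_{\{a\}}$ are trivial). *)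

(* Defs.v *)
(* The pure braid group P_n is given by a
   presentation; we model its elements as equivalence classes of words in the
   generators p_{a,b}^{+-1} (1 <= a < b <= n) modulo the congruence generated by
   free cancellation and the relations (A), (B), (C). *)
From mathcomp Require Import all_boot.
Set Implicit Arguments. Unset Strict Implicit. Unset Printing Implicit Defensive.

(* A letter (a, b, s) stands for p_{a,b} if s = true, p_{a,b}^{-1} if s = false. *)
Definition letter := (nat * nat * bool)%type.
Definition word := seq letter.

Definition valid_letter (n : nat) (x : letter) : bool :=
  let: (a, b, _) := x in [&& 1 <= a, a < b & b <= n].

Definition valid_word (n : nat) (w : word) : bool := all (valid_letter n) w.

Definition inv_letter (x : letter) : letter :=
  let: (a, b, s) := x in (a, b, ~~ s).

Definition gp (a b : nat) : letter := (a, b, true).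
Definition gpi (a b : nat) : letter := (a, b, false).

Inductive braid_rel (n : nat) : word -> word -> Prop :=
| relA1 a b c : 1 <= a -> a < b -> b < c -> c <= n ->
    braid_rel n [:: gp a b; gp a c; gp b c] [:: gp a c; gp b c; gp a b]
| relA2 a b c : 1 <= a -> a < b -> b < c -> c <= n ->
    braid_rel n [:: gp a c; gp b c; gp a b] [:: gp b c; gp a b; gp a c]
| relB1 a b c d : 1 <= a -> a < b -> b < c -> c < d -> d <= n ->
    braid_rel n [:: gp a b; gp c d] [:: gp c d; gp a b]
| relB2 a b c d : 1 <= a -> a < b -> b < c -> c < d -> d <= n ->
    braid_rel n [:: gp a d; gp b c] [:: gp b c; gp a d]
| relC a b c d : 1 <= a -> a < b -> b < c -> c < d -> d <= n ->
    braid_rel n [:: gp a c; gpi b c; gp b d; gp b c]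
                [:: gpi b c; gp b d; gp b c; gp a c].

Inductive braid_eq (n : nat) : word -> word -> Prop :=
| beq_refl w : braid_eq n w w
| beq_sym u v : braid_eq n u v -> braid_eq n v u
| beq_trans u v w : braid_eq n u v -> braid_eq n v w -> braid_eq n u w
| beq_ctx u v x y : braid_eq n x y -> braid_eq n (u ++ x ++ v) (u ++ y ++ v)
| beq_free x : valid_letter n x -> braid_eq n [:: x; inv_letter x] [::]
| beq_rel u v : braid_rel n u v -> braid_eq n u v.

Definition in_PS (n : nat) (S : pred nat) (w : word) : Prop :=
  exists w' : word,
    all (fun x : letter => let: (a, b, _) := x in S a && S b) w' /\
    valid_word n w' /\ braid_eq n w w'.

(* Main.v *)
Require Import Defs.
From mathcomp Require Import all_boot zify.

Definition keep (S : pred nat) (x : letter) : bool :=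
  let: (a, b, _) := x in S a && S b.

Lemma canc_l n b c x : 1 <= b -> b < c -> c <= n ->
  braid_eq n [:: x; gpi b c; gp b c] [:: x].
Proof.
move=> h1 h2 h3.
have := @beq_ctx n [:: x] [::] [:: gpi b c; gp b c] [::].
rewrite /=; apply; apply: (@beq_free n (gpi b c)).
by rewrite /= h1 h2 h3.
Qed.

Lemma canc_r n b c x : 1 <= b -> b < c -> c <= n ->
  braid_eq n [:: gpi b c; gp b c; x] [:: x].
Proof.
move=> h1 h2 h3.
have := @beq_ctx n [::] [:: x] [:: gpi b c; gp b c] [::].
rewrite /=; apply; apply: (@beq_free n (gpi b c)).
by rewrite /= h1 h2 h3.
Qed.

Lemma braid_eq_filter n S u v : braid_eq n u v ->
  braid_eq n (filter (keep S) u) (filter (keep S) v).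
Proof.
elim=> {u v}.
- by move=> w; apply: beq_refl.
- by move=> u v _ H; apply: beq_sym.
- by move=> u v w _ H1 _ H2; apply: beq_trans H1 H2.
- by move=> u v x y _ H; rewrite !filter_cat; apply: beq_ctx.
- move=> [[a b] s] Hv /=; case: (S a && S b) => /=; last by apply: beq_refl.
  by apply: (@beq_free n (a, b, s)).
- move=> u v [] a b c; [move=> h1 h2 h3 h4 | move=> h1 h2 h3 h4 |
    move=> d h1 h2 h3 h4 h5 | move=> d h1 h2 h3 h4 h5 | move=> d h1 h2 h3 h4 h5];
  rewrite /= /keep /=;
  case: (S a); case: (S b); case: (S c); try case: (S d); rewrite /=;
  try (by apply: beq_refl);
  try (by apply: beq_rel; first [by apply: relA1 | by apply: relA2 | by apply: relB1 | by apply: relB2 | by apply: relC]);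
  try (apply: beq_trans; [apply: canc_l | apply: beq_sym; apply: canc_r]);
  lia.
Qed.

Lemma in_PS_iff n S w : valid_word n w ->
  in_PS n S w <-> braid_eq n w (filter (keep S) w).
Proof.
move=> Hw; split.
- case=> w' [Ha [Hv He]].
  have E : filter (keep S) w' = w'.
    by apply/all_filterP; exact: Ha.
  apply: (beq_trans He); rewrite -{1}E; apply: braid_eq_filter; exact: beq_sym He.
- move=> H; exists (filter (keep S) w); split; last split => //.
  + exact: (filter_all (keep S) w).
  + by rewrite /valid_word all_filter; apply: sub_all Hw => x Hx; apply/implyP.

Qed.

Lemma allS (S : nat -> pred nat) a k :
  all (fun i => S i a) (iota 0 k.+1) = all (fun i => S i a) (iota 0 k) && S k a.
Proof. by rewrite -addn1 iotaD all_cat /= andbT. Qed.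

Lemma filter_comp (p q : pred letter) w :
  filter p (filter q w) = filter (predI p q) w.
Proof. by rewrite -filter_predI. Qed.

Theorem proposition1p2 (n m : nat) (S : nat -> pred nat) :
  (forall i, i < m -> forall a, S i a -> (1 <= a <= n)) ->
  forall w : word, valid_word n w ->
    ((forall i, i < m -> in_PS n (S i) w) <->
     in_PS n (fun a => all (fun i => S i a) (iota 0 m)) w).
Proof.
move=> _ w Hw; split.
- move=> H; apply/(@in_PS_iff _ _ _ Hw).
  have: forall k, k <= m ->
     braid_eq n w (filter (keep (fun a => all (fun i => S i a) (iota 0 k))) w).
    elim=> [|k IH] Hk.
      have -> : filter (keep (fun a => all (fun i => S i a) (iota 0 0))) w = w.
        by apply/all_filterP; apply/allP => -[[a b] s].
      exact: beq_refl.
    have Hk' : k <= m by apply: ltnW.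
    have := H k Hk => /(@in_PS_iff _ _ _ Hw) H1.
    apply: beq_trans (IH Hk') _.
    have -> : filter (keep (fun a => all (fun i => S i a) (iota 0 k.+1))) w =
       filter (keep (fun a => all (fun i => S i a) (iota 0 k)))
              (filter (keep (S k)) w).
      rewrite filter_comp; apply: eq_filter => -[[a b] s].
      rewrite /keep !allS.
      rewrite /predI /=; by case: (S k a); case: (S k b); case: (all _ (iota 0 k)); case: (all _ (iota 0 k)).
    exact: braid_eq_filter.
  by apply.
- case=> w' [Ha [Hv He]] i Hi; exists w'; split => //.
  apply: sub_all Ha => -[[a b] s] /andP [A B].
  have Hin : i \in iota 0 m by rewrite mem_iota.
  by rewrite (allP A _ Hin) (allP B _ Hin).
Qed.
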